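(* Let $\beta:\mathbb R\to\mathbb R$ be piecewise continuous with $\beta(-t)^2=\beta(t)^2$ for all $t$, and let $\Lambda(t)=\begin{pmatrix}0&1\\-\beta(t)^2&0\end{pmatrix}$. For $s\le t$ let $b(t,s)$ be the real $2\times2$ matrix solving $\frac{\partial}{\partial t}b(t,s)=\Lambda(t)b(t,s)$, $b(s,s)=\mathbb 1$, and set $b(t):=b(t,-t)$ for $t\ge0$. If for some $t\ge0$ one has $\mathrm{Tr}\,b(t)=2$, then $b(t)=\begin{pmatrix}1&0\\-a&1\end{pmatrix}$ for some $a\in\mathbb R$ or $b(t)=\begin{pmatrix}1&\tau\\0&1\end{pmatrix}$ for some $\tau\in\mathbb R$; if $\mathrm{Tr}\,b(t)=-2$, then $b(t)=-\begin{pmatrix}1&0\\-a&1\end{pmatrix}$ for some $a\in\mathbb R$ or $b(t)=-\begin{pmatrix}1&\tau\\0&1\end{pmatrix}$ for some $\tau\in\mathbb R$. *)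

(* Defs.v *)
From HB Require Import structures.
From mathcomp Require Import all_boot all_order all_algebra.
From mathcomp Require Import all_classical all_reals all_analysis.
Set Implicit Arguments. Unset Strict Implicit. Unset Printing Implicit Defensive.
Import Order.TTheory GRing.Theory Num.Theory.
Import numFieldNormedType.Exports.
Local Open Scope classical_set_scope.
Local Open Scope ring_scope.

Definition mx2 {R : realType} (a b c d : R) : 'M[R]_2 :=
  \matrix_(i < 2, j < 2)
    if i == 0 :> nat then (if j == 0 :> nat then a else b)
    else (if j == 0 :> nat then c else d).

Definition piecewise_continuous {R : realType} (f : R -> R) : Prop :=
  (forall a c : R, exists D : seq R,
     forall x : R, a <= x <= c -> x \notin D -> {for x, continuous f})
  /\ (forall x : R,
        (exists l : R, f y @[y --> x^'-] --> l) /\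
        (exists l : R, f y @[y --> x^'+] --> l)).

Definition Lambda {R : realType} (beta : R -> R) (t : R) : 'M[R]_2 :=
  mx2 0 1 (- (beta t ^+ 2)) 0.

(* b(., s) is the (continuous, piecewise C^1) solution on [s, +oo) of
   d/dt b(t,s) = Lambda(t) b(t,s), b(s,s) = 1: it is continuous on [s,+oo),
   and differentiable (entrywise) with the prescribed derivative at every
   t > s at which beta is continuous. *)
Definition is_propagator {R : realType} (beta : R -> R)
    (b : R -> R -> 'M[R]_2) : Prop :=
  forall s : R,
    b s s = 1%:M /\
    (forall i j : 'I_2,
       {within `[s, +oo[, continuous (fun u => b u s i j)}) /\
    (forall t : R, s < t -> {for t, continuous beta} ->
       forall i j : 'I_2,
         is_derive t 1 (fun u => b u s i j) ((Lambda beta t *m b t s) i j)).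

(* Main.v *)
Require Import Defs.
From HB Require Import structures.
From mathcomp Require Import all_boot all_order all_algebra.
From mathcomp Require Import all_classical all_reals all_analysis.
From mathcomp Require Import ring lra.
Import Order.TTheory GRing.Theory Num.Theory.
Import numFieldNormedType.Exports.
Local Open Scope classical_set_scope.
Local Open Scope ring_scope.
Section S.
Variable R : realType.

Lemma const_pw (f : R -> R) (D : seq R) : forall a c, a <= c ->
  {within `[a,c], continuous f} ->
  (forall x, a < x < c -> x \notin D -> is_derive x 1 f 0) -> f a = f c.
Proof.
elim: D => [|d D IH] a c ac fc fd.
  move: ac; rewrite le_eqVlt => /orP[/eqP->//|ac].
  have hd : forall x, x \in `]a, c[ -> is_derive x 1 f ((fun _ => 0) x).
    by move=> x; rewrite in_itv /= => xi; apply: fd.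
  have [x _ ] := MVT ac hd fc.
  by rewrite mul0r => /eqP; rewrite subr_eq0 => /eqP.
have [/andP[ad dc]|nd] := boolP (a < d < c).
  have sub1 : `[a, d] `<=` `[a, c].
    by move=> x; rewrite /= !in_itv /= => /andP[-> /le_trans]; apply; apply: ltW.
  have sub2 : `[d, c] `<=` `[a, c].
    by move=> x; rewrite /= !in_itv /= => /andP[/(le_trans (ltW ad)) -> ->].
  have -> : f a = f d.
    apply: (IH a d (ltW ad) (continuous_subspaceW sub1 fc)).
    move=> x /andP[ax xd] xD; apply: fd; first by rewrite ax (lt_trans xd dc).
    by rewrite in_cons negb_or xD andbT; apply/eqP => e; move: xd; rewrite e ltxx.
  apply: (IH d c (ltW dc) (continuous_subspaceW sub2 fc)).
  move=> x /andP[dx xc] xD; apply: fd; first by rewrite (lt_trans ad dx).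
  by rewrite in_cons negb_or xD andbT; apply/eqP => xd; move: dx; rewrite xd ltxx.
apply: (IH a c ac fc) => x xi xD; apply: fd => //.
rewrite in_cons negb_or xD andbT; apply/eqP => e; move: nd; rewrite -e xi.
by [].
Qed.

Lemma within_continuousM (A : set R) (f g : R -> R) :
  {within A, continuous f} -> {within A, continuous g} ->
  {within A, continuous (f * g)}.
Proof. by move=> cf cg x; apply: cvgM; [exact: cf|exact: cg]. Qed.

Lemma is_derive_compN (f : R -> R) (x df : R) : is_derive (-x) 1 f df ->
  is_derive x 1 (f \o -%R) (- df).
Proof.
move=> hf.
have d1 : derivable f (-x) 1 by case: hf.
have d2 : derivable (-%R : R -> R) x 1 by case: (is_deriveNid x 1).
apply: DeriveDef.
  apply/derivable1_diffP; apply: differentiable_comp; exact/derivable1_diffP.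
rewrite -derive1E derive1_comp // !derive1E derive_val.
by rewrite (@derive_val _ _ _ _ _ _ _ (is_deriveNid x 1)) mulrN1.
Qed.


Lemma LamM (beta : R -> R) u (M : 'M[R]_2) :
  (Lambda beta u *m M) 0 0 = M 1 0 /\ (Lambda beta u *m M) 0 1 = M 1 1 /\
  (Lambda beta u *m M) 1 0 = - beta u ^+ 2 * M 0 0 /\
  (Lambda beta u *m M) 1 1 = - beta u ^+ 2 * M 0 1.
Proof.
rewrite /Lambda /mx2 !mxE !big_ord_recl !big_ord0 !mxE /=.
have e1 : lift ord0 ord0 = (1 : 'I_2) by apply/val_inj.
have e0 : ord0 = (0 : 'I_2) by apply/val_inj.
rewrite e1 e0 !mul0r !mul1r !addr0 !add0r; do !split.
Qed.

Lemma mx2_eq (M : 'M[R]_2) : M = mx2 (M 0 0) (M 0 1) (M 1 0) (M 1 1).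
Proof.
apply/matrixP => i j; rewrite !mxE.
by case: i => [[|[|?]] ?] //; case: j => [[|[|?]] ?] //=; congr (M _ _); apply/val_inj.
Qed.

Lemma mx2N (a b c d : R) : - mx2 a b c d = mx2 (-a) (-b) (-c) (-d).
Proof. by apply/matrixP => i j; rewrite !mxE; case: ifP; case: ifP. Qed.

End S.

Theorem proposition4 (R : realType) (beta : R -> R) (b : R -> R -> 'M[R]_2)
  (hpc : piecewise_continuous beta)
  (hsym : forall t : R, beta (- t) ^+ 2 = beta t ^+ 2)
  (hb : is_propagator beta b)
  (t : R) (ht : 0 <= t) :
  (\tr (b t (- t)) = 2 ->
     (exists a : R, b t (- t) = mx2 1 0 (- a) 1) \/
     (exists tau : R, b t (- t) = mx2 1 tau 0 1)) /\
  (\tr (b t (- t)) = -2 ->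
     (exists a : R, b t (- t) = - mx2 1 0 (- a) 1) \/
     (exists tau : R, b t (- t) = - mx2 1 tau 0 1)).
Proof.
have [b1 [bc bd]] := hb (- t).
pose p : R -> R := fun u => (b u (- t) 0 0 : R).
pose q : R -> R := fun u => (b u (- t) 0 1 : R).
pose r : R -> R := fun u => (b u (- t) 1 0 : R).
pose s : R -> R := fun u => (b u (- t) 1 1 : R).
have [D hD] := hpc.1 (- t) t.
pose E := D ++ map -%R D.
have tt : - t <= t by lra.
have hder : forall u, - t < u < t -> u \notin E ->
   is_derive u 1 p (r u) /\ is_derive u 1 q (s u) /\
   is_derive u 1 r (- beta u ^+ 2 * p u) /\ is_derive u 1 s (- beta u ^+ 2 * q u).
  move=> u /andP[u1 u2]; rewrite mem_cat negb_or => /andP[uD _].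
  have cu : {for u, continuous beta}.
    by apply: hD => //; rewrite (ltW u1) (ltW u2).
  have [e1 [e2 [e3 e4]]] := LamM _ beta u (b u (- t)).
  split; [|split; [|split]].
  - by have := bd u u1 cu 0 0; rewrite e1.
  - by have := bd u u1 cu 0 1; rewrite e2.
  - by have := bd u u1 cu 1 0; rewrite e3.
  - by have := bd u u1 cu 1 1; rewrite e4.
have sub : `[- t, t] `<=` `[- t, +oo[.
  by move=> x; rewrite /= !in_itv /= andbT => /andP[].
have cp : {within `[- t, t], continuous p} := continuous_subspaceW sub (bc 0 0).
have cq : {within `[- t, t], continuous q} := continuous_subspaceW sub (bc 0 1).
have cr : {within `[- t, t], continuous r} := continuous_subspaceW sub (bc 1 0).
have cs : {within `[- t, t], continuous s} := continuous_subspaceW sub (bc 1 1).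
have cNq : {within `[- t, t], continuous (q \o -%R)}.
  by apply: within_continuous_compN; rewrite opprK.
have cNs : {within `[- t, t], continuous (s \o -%R)}.
  by apply: within_continuous_compN; rewrite opprK.
have hW : (p * s - q * r) (- t) = (p * s - q * r) t.
  apply: (@const_pw _ _ E) => //.
    apply: within_continuousB; exact: within_continuousM.
  move=> u ui uE; have [dp [dq [dr ds]]] := hder u ui uE.
  apply: (is_derive_eq (is_deriveB (is_deriveM dp ds) (is_deriveM dq dr))).
  rewrite /GRing.scale /=; ring.
have hF : ((s \o -%R) * p + (q \o -%R) * r) (- t) =
          ((s \o -%R) * p + (q \o -%R) * r) t.
  apply: (@const_pw _ _ E) => //.
    apply: within_continuousD; exact: within_continuousM.
  move=> u /andP[u1 u2] uE; have [dp [dq [dr ds]]] := hder u ltac:(by rewrite u1 u2) uE.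
  have uE' : - u \notin E.
    move: uE; rewrite !mem_cat !negb_or => /andP[h1 h2]; apply/andP; split.
      by apply: contra h2 => h; apply/mapP; exists (- u); rewrite ?opprK.
    by apply: contra h1 => /mapP[y yD /oppr_inj ->].
  have [dp' [dq' [dr' ds']]] := hder (- u) ltac:(apply/andP; split; lra) uE'.
  have dNs := @is_derive_compN _ _ _ _ ds'.
  have dNq := @is_derive_compN _ _ _ _ dq'.
  apply: (is_derive_eq (is_deriveD (is_deriveM dNs dp) (is_deriveM dNq dr))).
  rewrite /GRing.scale /= hsym; ring.
have hW' : p (- t) * s (- t) - q (- t) * r (- t) = p t * s t - q t * r t := hW.
have hF' : s (- - t) * p (- t) + q (- - t) * r (- t) = s (- t) * p t + q (- t) * r t := hF.
move: hW' hF'; rewrite /p /q /r /s opprK b1 !mxE /=.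
have tr : \tr (b t (- t)) = b t (- t) 0 0 + b t (- t) 1 1.
  rewrite /mxtrace !big_ord_recl big_ord0 addr0.
  by have -> : lift ord0 ord0 = (1 : 'I_2) by apply/val_inj.
rewrite tr.
have E0 := mx2_eq _ (b t (- t)).
set p0 := b t (- t) 0 0 in E0 *; set q0 := b t (- t) 0 1 in E0 *.
set r0 := b t (- t) 1 0 in E0 *; set s0 := b t (- t) 1 1 in E0 *.
rewrite E0 !mul1r !mulr1 !mulr0 !mul0r !addr0 subr0 => hdet hps.
rewrite -hps in hdet *.
split=> htr.
  have s1 : s0 = 1 by lra.
  rewrite s1 in hdet *.
  have /orP[/eqP q00|/eqP r00] : (q0 == 0) || (r0 == 0).
    by rewrite -mulf_eq0; apply/eqP; lra.
    by left; exists (- r0); rewrite opprK q00.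
  by right; exists q0; rewrite r00.
have s1 : s0 = -1 by lra.
rewrite s1 in hdet *.
have /orP[/eqP q00|/eqP r00] : (q0 == 0) || (r0 == 0).
  by rewrite -mulf_eq0; apply/eqP; lra.
  by left; exists r0; rewrite mx2N !opprK oppr0 q00.
by right; exists (- q0); rewrite mx2N !opprK oppr0 r00.
Qed.
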